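(* Let $n\in\mathbb{N}$ and let $g$ be a nonzero real number. Let $\mathcal{C}=\{q\in\mathbb{R}^n \mid q_1>\dots>q_n\}$ and, for $q\in\mathcal{C}$, $p\in\mathbb{R}^n$, define the $n\times n$ matrices $$Q_{jk}=q_j\delta_{jk},\qquad L_{jk}=p_j\delta_{jk}+\mathrm{i} g\,\frac{1-\delta_{jk}}{q_j-q_k},\qquad j,k=1,\dots,n.$$ Let $A(z)=\det(z\mathbf{1}_n-L)$ and $D(z)=\operatorname{tr}\big(Q\operatorname{adj}(z\mathbf{1}_n-L)\big)$, where $\operatorname{adj}$ denotes the adjugate matrix. Let $\lambda_1>\dots>\lambda_n$ be the eigenvalues of the Hermitian matrix $L$, and let $\phi_1,\dots,\phi_n$ be the angle variables of the rational Calogero--Moser system, i.e. $\phi_k=(UQU^\dagger)_{kk}$ for a unitary matrix $U$ with $ULU^\dagger=\operatorname{diag}(\lambda_1,\dots,\lambda_n)$ (for the Calogero--Moser point $(q,p)$ such $U$ can be chosen so that $UQU^\dagger$ has entries $\phi_j\delta_{jk}-\mathrm{i} g\frac{1-\delta_{jk}}{\lambda_j-\lambda_k}$). Then for every $(q,p)\in\mathcal{C}\times\mathbb{R}^n$ and every $k=1,\dots,n$, $$\mu_k:=\frac{D(\lambda_k)}{A'(\lambda_k)}=\phi_k .$$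
   Context: This concerns the rational Calogero--Moser system with Hamiltonian $H=\frac12\sum_j p_j^2+g^2\sum_{j<k}(q_j-q_k)^{-2}$ on the phase space $T^*\mathcal{C}=\{(q,p)\mid q\in\mathcal{C},p\in\mathbb{R}^n\}$ with symplectic form $\sum_j dq_j\wedge dp_j$. The system arises by Hamiltonian reduction of pairs of Hermitian matrices $(X,P)$ with symplectic form $\operatorname{tr}(dX\wedge dP)$ under the conjugation action of $U(n)$ at the moment map value $[X,P]=\mathrm{i} g(vv^\dagger-\mathbf{1}_n)$, $v=(1,\dots,1)^\dagger$; gauge-fixing $X$ diagonal gives $(Q,L)$ above, while gauge-fixing $P$ diagonal gives the pair $\tilde L=\operatorname{diag}(\lambda)$, $\tilde Q_{jk}=\phi_j\delta_{jk}-\mathrm{i} g\frac{1-\delta_{jk}}{\lambda_j-\lambda_k}$, and $(q,p)\mapsto(\phi,\lambda)$ is a canonical transformation (action-angle variables) with $\sum_j d\phi_j\wedge d\lambda_j$ the transformed symplectic form. *)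

(* Defs.v *)
From HB Require Import structures.
From mathcomp Require Import all_boot all_order all_algebra.
From mathcomp Require Import complex.
Set Implicit Arguments. Unset Strict Implicit. Unset Printing Implicit Defensive.
Import Order.TTheory GRing.Theory Num.Theory.
Local Open Scope ring_scope.
Local Open Scope complex_scope.

Section CM.
Variable R : rcfType.
Variable n : nat.

Definition strictly_decreasing (x : 'I_n -> R) : Prop :=
  forall j k : 'I_n, (j < k)%N -> x k < x j.

Definition adjoint (M : 'M[R[i]]_n) : 'M[R[i]]_n := (map_mx (fun z => z^*) M)^T.

Definition unitary (U : 'M[R[i]]_n) : Prop := U *m adjoint U = 1%:M.

Definition CM_Q (q : 'I_n -> R) : 'M[R[i]]_n := diag_mx (\row_j (q j)%:C).

Definition CM_L (g : R) (q p : 'I_n -> R) : 'M[R[i]]_n :=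
  \matrix_(j, k) (if j == k then (p j)%:C
                  else 'i * g%:C / (q j - q k)%:C).

Definition CM_A (g : R) (q p : 'I_n -> R) : {poly R[i]} := char_poly (CM_L g q p).

Definition CM_D (g : R) (q p : 'I_n -> R) (z : R[i]) : R[i] :=
  \tr (CM_Q q *m \adj (z%:M - CM_L g q p)).

End CM.

(* Main.v *)
Require Import Defs.
From HB Require Import structures.
From mathcomp Require Import all_boot all_order all_algebra.
From mathcomp Require Import complex.
Import Order.TTheory GRing.Theory Num.Theory.
Local Open Scope ring_scope.

Lemma adj_uniq (R : idomainType) n (B X : 'M[R]_n) :
  \det B != 0 -> B *m X = (\det B)%:M -> X = \adj B.
Proof.
move=> nz BX.
have H : B *m (X - \adj B) = 0 by rewrite mulmxBr BX mul_mx_adj subrr.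
have : \adj B *m B *m (X - \adj B) = 0 by rewrite -mulmxA H mulmx0.
rewrite mul_adj_mx mul_scalar_mx => /eqP; rewrite scalemx_eq0 (negbTE nz) /=.
by rewrite subr_eq0 => /eqP.
Qed.

Lemma adj_diag (R : idomainType) n (d : 'I_n -> R) :
  \prod_i d i != 0 ->
  \adj (diag_mx (\row_i d i)) = diag_mx (\row_i \prod_(j | j != i) d j).
Proof.
move=> nz; symmetry; apply: adj_uniq; rewrite det_diag.
  by rewrite (eq_bigr d) // => i _; rewrite mxE.
rewrite mulmx_diag -diag_const_mx; congr diag_mx; apply/rowP => i.
rewrite !mxE [RHS](bigD1 i) //= mxE; congr (_ * _).
by apply: eq_bigr => j _; rewrite mxE.
Qed.

Lemma key (F : fieldType) n (L U V Q : 'M[F]_n) (c : 'I_n -> F) (k : 'I_n) :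
  U *m V = 1%:M -> U *m L *m V = diag_mx (\row_k c k) -> injective c ->
  \tr (Q *m \adj ((c k)%:M - L)) / (char_poly L)^`().[c k] = (U *m Q *m V) k k.
Proof.
move=> UV HL injc.
have VU : V *m U = 1%:M := mulmx1C UV.
set Lam := diag_mx _ in HL.
have Ldef : L = V *m Lam *m U.
  by rewrite -HL !mulmxA VU mul1mx -mulmxA VU mulmx1.
pose pc (M : 'M[F]_n) : 'M[{poly F}]_n := map_mx polyC M.
pose b i := 'X - (c i)%:P.
pose Bp : 'M[{poly F}]_n := diag_mx (\row_i b i).
have HB : char_poly_mx Lam = Bp.
  apply/matrixP => i j; rewrite !mxE.
  by case: (i == j); rewrite ?mulr1n ?mulr0n ?subr0.
have HC : char_poly_mx L = pc V *m Bp *m pc U.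
  rewrite -HB /char_poly_mx Ldef /pc !map_mxM mulmxBr mulmxBl; congr (_ - _).
  by rewrite scalar_mxC -mulmxA -map_mxM VU map_mx1 mulmx1.
have pVU : pc V *m pc U = 1%:M by rewrite -map_mxM VU map_mx1.
have detB : \det Bp = \prod_i b i.
  by rewrite det_diag; apply: eq_bigr => i _; rewrite mxE.
have nzB : \prod_i b i != 0 by apply: monic_neq0; apply: monic_prod_XsubC.
have detC : \det (char_poly_mx L) = \det Bp.
  rewrite HC !det_mulmx mulrC mulrA -det_mulmx mulrC.
  by rewrite [pc U *m _]mulmx1C // det1 mulr1.
pose e i := \prod_(j | j != i) b j.
have adjB : \adj Bp = diag_mx (\row_i e i) by apply: adj_diag.
have adjC : \adj (char_poly_mx L) = pc V *m \adj Bp *m pc U.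
  symmetry; apply: adj_uniq; first by rewrite detC detB.
  rewrite detC HC -!mulmxA (mulmxA (pc U)) [pc U *m _]mulmx1C // mul1mx.
  by rewrite (mulmxA Bp) mul_mx_adj mul_scalar_mx -scalemxAr pVU scalemx1.
pose z := c k.
pose f := horner_eval z.
have HzL : (z%:M - L) = map_mx f (char_poly_mx L).
  apply/matrixP => i j; rewrite !mxE /f /horner_eval.
  by case: (i == j); rewrite ?mulr1n ?mulr0n !hornerE.
have pcf M : map_mx f (pc M) = M.
  by apply/matrixP => i j; rewrite !mxE /f /horner_eval hornerC.
have fd : map_mx f (diag_mx (\row_i e i)) = diag_mx (\row_i (e i).[z]).
  apply/matrixP => i j; rewrite !mxE /f /horner_eval.
  by case: (i == j); rewrite ?mulr1n ?mulr0n ?horner0 // mxE.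
have adjz : \adj (z%:M - L) = V *m diag_mx (\row_i (e i).[z]) *m U.
  by rewrite HzL -map_mx_adj adjC adjB !map_mxM !pcf fd.
have ez i : i != k -> (e i).[z] = 0.
  move=> ik; rewrite /e horner_prod (bigD1 k) /=; last by rewrite eq_sym.
  by rewrite hornerXsubC subrr mul0r.
have ek : (e k).[z] = \prod_(j | j != k) (z - c j).
  by rewrite /e horner_prod; apply: eq_bigr => j _; rewrite hornerXsubC.
have nzk : (e k).[z] != 0.
  rewrite ek; apply/prodf_neq0 => j jk; rewrite subr_eq0.
  by apply/eqP => /injc E; move: jk; rewrite E eqxx.
have dA : (char_poly L)^`().[z] = (e k).[z].
  rewrite /char_poly detC detB (bigD1 k) //= derivM derivXsubC mul1r.
  by rewrite hornerD hornerM hornerXsubC subrr mul0r addr0.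
rewrite dA adjz !mulmxA mxtrace_mulC !mulmxA mul_mx_diag /mxtrace (bigD1 k) //=.
rewrite big1 ?addr0; first by rewrite !mxE mulfK.
by move=> i ik; rewrite !mxE ez // mulr0.
Qed.

Local Open Scope complex_scope.

Theorem mainTheorem1 (R : rcfType) (n : nat) (g : R) (q p lam : 'I_n -> R)
    (U : 'M[R[i]]_n) :
  g != 0 ->
  strictly_decreasing q ->
  strictly_decreasing lam ->
  unitary U ->
  U *m CM_L g q p *m adjoint U = diag_mx (\row_k (lam k)%:C) ->
  forall k : 'I_n,
    CM_D g q p (lam k)%:C / ((CM_A g q p)^`()).[(lam k)%:C]
    = (U *m CM_Q q *m adjoint U) k k.
Proof.
move=> _ _ declam uni HL k.
have inj : injective (fun k : 'I_n => (lam k)%:C).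
  move=> j l /= E.
  have E' : lam j = lam l by case: E.
  apply/eqP; rewrite -val_eqE /=; case: (ltngtP j l) => // jl.
    by move: (declam _ _ jl); rewrite E' ltxx.
  by move: (declam _ _ jl); rewrite E' ltxx.
have H := (@key _ n (CM_L g q p) U (adjoint U) (CM_Q q) (fun k => (lam k)%:C) k uni HL inj).
rewrite /CM_D /CM_A; exact: H.
Qed.
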